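(* Let $n=Hc$ i.i.d. samples be drawn from the uniform distribution on $[0,1]$, with order statistics $y_{(1,n)}\le\dots\le y_{(n,n)}$. For $H,c$ sufficiently large and $k=1,\dots,H-1$: (i) there is a constant $C>0$ such that for any $\epsilon>\frac1{Hc-1}$, $\mathbb{P}\big(y_{(kc,Hc)}>\frac kH+\epsilon\big)\le CH\sqrt{Hc+1}\exp\big(-(Hc+1)\frac{\epsilon^2}2\big)$; (ii) there is a constant $C>0$ such that for any $\epsilon>\frac2{Hc-1}$, $\mathbb{P}\big(y_{(kc,Hc)}<\frac kH-\epsilon\big)\le CH\sqrt{Hc+1}\exp\big(-(Hc+1)\frac{\epsilon^2}8\big)$; (iii) let $\delta(k,H,c)=|y_{((k-1)c,Hc)}-y_{(kc,Hc)}|$ for $2\le k\le H-1$, $\delta(1,H,c)=|y_{(c,Hc)}|$ and $\delta(H,H,c)=|1-y_{((H-1)c,Hc)}|$; there is a constant $C>0$ such that for any $\epsilon>\frac4{Hc-1}$ and any $1\le k\le H$, $\mathbb{P}\big(|\delta(k,H,c)-\frac1H|>\epsilon\big)\le CH\sqrt{Hc+1}\exp\big(-(Hc+1)\frac{\epsilon^2}{32}\big)$.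
   Context: $y_{(i,n)}$ denotes the $i$-th smallest of $n$ samples. *)

(* Defs.v *)
From HB Require Import structures.
From mathcomp Require Import all_boot all_order all_algebra.
From mathcomp Require Import all_classical all_reals all_analysis.
Set Implicit Arguments. Unset Strict Implicit. Unset Printing Implicit Defensive.
Import Order.TTheory GRing.Theory Num.Theory.
Local Open Scope classical_set_scope.
Local Open Scope ring_scope.

(* y_(i,n): the i-th smallest (1-based) of the n samples x 0, ..., x (n-1). *)
Definition ostat (R : realType) (n i : nat) (x : 'I_n -> R) : R :=
  nth 0 (sort (fun a b : R => a <= b) [seq x j | j <- enum 'I_n]) i.-1.
Arguments ostat {R} n i x.

Definition delta (R : realType) (H c k : nat) (x : 'I_(H * c) -> R) : R :=
  if k == 1%N then `| ostat (H * c) c x |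
  else if k == H then `| 1 - ostat (H * c) ((H - 1) * c) x |
  else `| ostat (H * c) ((k - 1) * c) x - ostat (H * c) (k * c) x |.
Arguments delta {R} H c k x.

Definition mutually_independent (d : measure_display) (T : measurableType d)
  (R : realType) (P : probability T R) (n : nat) (X : 'I_n -> T -> R) : Prop :=
  forall (J : {set 'I_n}) (B : 'I_n -> set R),
    (forall j, measurable (B j)) ->
    P (\bigcap_(j in [set j | j \in J]) (X j @^-1` B j)) =
    (\prod_(j in J) P (X j @^-1` B j))%E.

Definition uniform01 (d : measure_display) (T : measurableType d)
  (R : realType) (P : probability T R) (X : T -> R) : Prop :=
  measurable_fun setT X /\
  forall B : set R, measurable B ->
    P (X @^-1` B) = (@lebesgue_measure R) (B `&` `[0%R, 1%R]).

Definition iid_uniform01 (d : measure_display) (T : measurableType d)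
  (R : realType) (P : probability T R) (n : nat) (X : 'I_n -> T -> R) : Prop :=
  (forall j, uniform01 P (X j)) /\ mutually_independent P X.

(* Main.v *)
Require Import Defs.
From HB Require Import structures.
From mathcomp Require Import all_boot all_order all_algebra.
From mathcomp Require Import all_classical all_reals all_analysis.
From mathcomp Require Import ring lra zify.
Import Order.TTheory GRing.Theory Num.Theory.
Import numFieldNormedType.Exports.
Local Open Scope classical_set_scope.
Local Open Scope ring_scope.
Section E.
Variable R : realType.
Lemma expN_quad (t : R) : 0 <= t -> expR (- t) <= 1 - t + t ^+ 2 / 2.
Proof.
move=> t0.
pose g (x : R) := expR x * (1 - x + x ^+ 2 / 2).
have dg (x : R) : is_derive x (1:R) g (expR x * (x ^+ 2 / 2)).
  rewrite /g; apply: is_derive_eq.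
  rewrite /GRing.scale /= ?mulr0 ?mul0r ?addr0 ?add0r ?mul1r ?mulr1; field. all: try by [].
have cg : continuous g.
  move=> y; apply: differentiable_continuous; apply/derivable1_diffP; apply: ex_derive; exact: dg.
have : g 0 <= g t.
  case: (eqVneq t 0) => [->//|tn0].
  have t0' : 0 < t by rewrite lt_neqAle eq_sym tn0 t0.
  have [c _ h] := MVT t0' (fun x _ => dg x) (continuous_subspaceT cg).
  rewrite -subr_ge0 h; apply: mulr_ge0; last by rewrite subr0.
  by apply: mulr_ge0; [exact: expR_ge0| apply: divr_ge0 => //; exact: sqr_ge0].
rewrite /g expR0 mul1r expr0n /= mul0r addr0 subr0.
move=> H; rewrite expRN.
by rewrite -div1r ler_pdivrMr ?expR_gt0 // mulrC.
Qed.
End E.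
Section C.
Variable R : realType.
Lemma chernoff_sum (n m : nat) (p t : R) : 0 <= p -> p <= 1 -> 0 <= t ->
  \sum_(f : {ffun 'I_n -> bool} | (#|[set j | f j]%SET| <= m)%N)
     \prod_(j < n) (if f j then p else 1 - p)
  <= expR (t * m%:R) * (1 - p + p * expR (- t)) ^+ n.
Proof.
move=> p0 p1 t0.
set e := expR (- t).
have wge0 (f : {ffun 'I_n -> bool}) : 0 <= \prod_(j < n) (if f j then p else 1 - p).
  by apply: prodr_ge0 => j _; case: (f j) => //; rewrite subr_ge0.
have key (f : {ffun 'I_n -> bool}) :
  expR (t * m%:R) * e ^+ #|[set j | f j]%SET| * \prod_(j < n) (if f j then p else 1 - p)
  = expR (t * m%:R) * \prod_(j < n) (if f j then p * e else 1 - p).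
  rewrite -mulrA; congr (_ * _).
  rewrite -prodr_const big_mkcond /= -big_split /=.
  apply: eq_bigr => j _.
  have -> : (j \in [set j0 | f j0]%SET) = f j by rewrite inE. case: (f j); by rewrite ?mul1r // mulrC.
apply: (@le_trans _ _ (\sum_(f : {ffun 'I_n -> bool}) expR (t * m%:R) * e ^+ #|[set j | f j]%SET|
      * \prod_(j < n) (if f j then p else 1 - p))).
  rewrite [leRHS](bigID (fun f : {ffun 'I_n -> bool} => (#|[set j | f j]%SET| <= m)%N)) /=.
  apply: ler_wpDr.
    apply: sumr_ge0 => f _; apply: mulr_ge0 => //.
    by apply: mulr_ge0; [exact: expR_ge0 | apply: exprn_ge0; exact: expR_ge0].
  apply: ler_sum => f hf; rewrite ler_peMl //.
  rewrite /e -expRM_natr -expRD -expR0 ler_expR.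
  rewrite mulNr -mulrBr mulr_ge0 // subr_ge0.
by rewrite expR0 ler_nat.
under eq_bigr => f _ do rewrite key.
rewrite -mulr_sumr ler_pM2l ?expR_gt0 //.
rewrite -(bigA_distr_bigA (fun (j : 'I_n) (b : bool) => if b then p * e else 1 - p)) /=.
under eq_bigr => j _ do rewrite big_bool /=.
by rewrite prodr_const card_ord addrC.
Qed.
End C.
Section Pr.
Variable R : realType.
Lemma chernoff_prob d (T : measurableType d) (P : probability T R) (n : nat)
  (a : 'I_n -> T -> bool) (p : R) (m : nat) :
  (forall f : {ffun 'I_n -> bool}, measurable [set w | forall j, a j w = f j]) ->
  (forall f : {ffun 'I_n -> bool}, P [set w | forall j, a j w = f j] =
      (\prod_(j < n) (if f j then p else 1 - p))%:E) ->
  measurable [set w | (#|[set j | a j w]%SET| <= m)%N] /\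
  P [set w | (#|[set j | a j w]%SET| <= m)%N] =
  (\sum_(f : {ffun 'I_n -> bool} | (#|[set j | f j]%SET| <= m)%N)
     \prod_(j < n) (if f j then p else 1 - p))%:E.
Proof.
move=> mpat Ppat.
set E := enum {ffun 'I_n -> bool}.
pose f0 : {ffun 'I_n -> bool} := [ffun => false].
pose G (f : {ffun 'I_n -> bool}) :=
  if (#|[set j | f j]%SET| <= m)%N then [set w | forall j, a j w = f j] else set0.
have EU : [set w | (#|[set j | a j w]%SET| <= m)%N] =
          \big[setU/set0]_(k < size E) G (nth f0 E k).
  apply/seteqP; split => w /=.
  - move=> hw; rewrite -(bigcup_mkord _ (fun k => G (nth f0 E k))).
    pose g : {ffun 'I_n -> bool} := [ffun j => a j w].
    have gE : g \in E by rewrite mem_enum.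
    exists (index g E); first by rewrite /= index_mem.
    rewrite nth_index // /G.
    have -> : [set j | g j]%SET = [set j | a j w]%SET.
      by apply/setP => j; rewrite !inE ffunE.
    by rewrite hw /= => j; rewrite ffunE.
  - rewrite -(bigcup_mkord _ (fun k => G (nth f0 E k))) => -[k _]; rewrite /G.
    case: ifP => // hc hw.
    have -> : [set j | a j w]%SET = [set j | nth f0 E k j]%SET.
      by apply/setP => j; rewrite !inE hw.
    exact: hc.
rewrite EU; split.
  by apply: bigsetU_measurable => k _; rewrite /G; case: ifP => _ //; exact: mpat.
rewrite measure_bigsetU_ord; last 2 first.
- by move=> i; rewrite /G; case: ifP => _ //; exact: mpat.
- move=> i k _ _ [w []]; rewrite /G.
  case: ifP => _ // h1; case: ifP => _ // h2.
  have e1 : nth f0 E i = nth f0 E k by apply/ffunP => j; rewrite -h1 h2.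
  apply: val_inj; apply/eqP.
  by rewrite -(nth_uniq f0 (ltn_ord i) (ltn_ord k) (enum_uniq _)) e1.
pose H (f : {ffun 'I_n -> bool}) :=
  if (#|[set j | f j]%SET| <= m)%N then \prod_(j < n) (if f j then p else 1 - p) else 0.
have -> : \sum_(i < size E) P (G (nth f0 E i)) = \sum_(i < size E) (H (nth f0 E i))%:E.
  by apply: eq_bigr => i _; rewrite /G /H; case: ifP => _; [exact: Ppat | exact: measure0].
rewrite sumEFin; congr (_%:E).
rewrite [RHS]big_mkcond /=.
rewrite -(big_mkord xpredT (fun i => H (nth f0 E i))) -(big_nth f0 xpredT H) /E.
by rewrite big_enum.
Qed.
End Pr.
Section Q.
Variable R : realType.
Lemma iid_pat d (T : measurableType d) (P : probability T R) (n : nat)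
  (X : 'I_n -> T -> R) (q : R -> bool) (p : R) :
  iid_uniform01 P X -> measurable [set y | q y] ->
  (@lebesgue_measure R) ([set y | q y] `&` `[0%R, 1%R]) = p%:E ->
  (forall f : {ffun 'I_n -> bool}, measurable [set w | forall j, q (X j w) = f j]) /\
  (forall f : {ffun 'I_n -> bool}, P [set w | forall j, q (X j w) = f j] =
      (\prod_(j < n) (if f j then p else 1 - p))%:E).
Proof.
move=> [hu hind] mQ hp.
set Q := [set y | q y].
pose B (f : {ffun 'I_n -> bool}) (j : 'I_n) := if f j then Q else ~` Q.
have mB (f : {ffun 'I_n -> bool}) j : measurable (B f j) by rewrite /B; case: (f j) => //; exact: measurableC.
have mX j S : measurable S -> measurable (X j @^-1` S).
  by move=> mS; rewrite -[X j @^-1` S]setTI; apply: (hu j).1.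
have patE (f : {ffun 'I_n -> bool}) : [set w | forall j, q (X j w) = f j] =
   \bigcap_(j in [set j | j \in ([set: 'I_n]%SET : {set 'I_n})]) (X j @^-1` B f j).
  apply/seteqP; split => w /=.
  - move=> h j _; rewrite /B /preimage /= -h /Q /=.
    by case E : (q (X j w)) => /=; rewrite ?E.
  - move=> h j; have hj : [set j | j \in ([set: 'I_n]%SET : {set 'I_n})] j by rewrite /= inE.
    have := h j hj.
    rewrite /B /preimage /Q /=; case: (f j) => //= hh.
    by apply/negbTE/negP.
split => f; rewrite patE.
  by apply: fin_bigcap_measurable; [exact: finite_finset | move=> j _; exact: mX].
rewrite hind //.
rewrite -prodEFin; apply: eq_big => [j|j _]; first by rewrite inE.
have h1 : P (X j @^-1` Q) = p%:E by rewrite ((hu j).2 _ mQ).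
rewrite /B; case: (f j); first exact: h1.
rewrite -preimage_setC probability_setC; last exact: mX.
by rewrite ((hu j).2 _ mQ) hp EFinB.
Qed.
End Q.
Lemma cnt_card n (Q : pred 'I_n) : count Q (enum 'I_n) = #|[set j | Q j]%SET|.
Proof. by rewrite cardsE cardE enumT /enum_mem size_filter; apply: eq_count. Qed.

Section O.
Variable R : realType.
Lemma sorted_count (s : seq R) (P : pred R) k :
  sorted (fun a b : R => a <= b) s -> (forall y z, z <= y -> P y -> P z) ->
  (k < size s)%N -> P (nth 0 s k) = (k < count P s)%N.
Proof.
move=> ss Pm ks.
have le_nth a b : (a <= b)%N -> (b < size s)%N -> nth 0 s a <= nth 0 s b.
  move=> ab bs; apply: (sorted_leq_nth le_trans lexx) => //.
  by rewrite inE (leq_ltn_trans ab bs).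
apply/idP/idP.
- move=> Pk; rewrite -(cat_take_drop k.+1 s) count_cat.
  have -> : count P (take k.+1 s) = k.+1.
    have sz : size (take k.+1 s) = k.+1 by rewrite size_takel.
    apply/eqP; rewrite -[X in _ == X]sz -all_count; apply/(all_nthP 0) => j; rewrite sz => jk.
    rewrite nth_take //; apply: Pm Pk; apply: le_nth => //.
  exact: leq_addr.
- apply: contraLR => nPk; rewrite -leqNgt.
  rewrite -(cat_take_drop k s) count_cat.
  have -> : count P (drop k s) = 0%N.
    rewrite (@eq_in_count _ _ pred0) ?count_pred0 // => x /(nthP 0) [j hj <-].
    rewrite nth_drop /=; apply/negbTE; apply: contra nPk => Pj.
    apply: Pm Pj; apply: le_nth; first exact: leq_addr.
    by rewrite size_drop ltn_subRL in hj.
  rewrite addn0; apply: leq_trans (count_size _ _) _.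
  by rewrite size_take_min geq_minl.
Qed.

Lemma ostat_count (n i : nat) (x : 'I_n -> R) (P : pred R) :
  (forall y z, z <= y -> P y -> P z) -> (0 < i <= n)%N ->
  P (ostat n i x) = (i <= #|[set j | P (x j)]%SET|)%N.
Proof.
move=> Pm /andP[i0 iN]; rewrite /ostat.
set s := sort _ _.
have sz : size s = n by rewrite size_sort size_map size_enum_ord.
rewrite sorted_count //; last by rewrite sz prednK.
- rewrite prednK // (permP (permEl (perm_sort _ _))) count_map.
  by rewrite -cnt_card.
- apply: sort_sorted => a b; exact: le_total.
Qed.
End O.

Section Cor.
Variable R : realType.

Lemma tail_gen d (T : measurableType d) (P : probability T R) (n : nat)
  (X : 'I_n -> T -> R) (q : R -> bool) (p : R) (m : nat) (t : R) :
  iid_uniform01 P X -> measurable [set y | q y] ->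
  (@lebesgue_measure R) ([set y | q y] `&` `[0%R, 1%R]) = p%:E ->
  0 <= p -> p <= 1 -> 0 <= t ->
  measurable [set w | (#|[set j | q (X j w)]%SET| <= m)%N] /\
  (P [set w | (#|[set j | q (X j w)]%SET| <= m)%N]
    <= (expR (t * m%:R) * (1 - p + p * expR (- t)) ^+ n)%:E)%E.
Proof.
move=> hX mQ hp p0 p1 t0.
have [mp Pp] := @iid_pat R d T P n X q p hX mQ hp.
have [mE PE] := @chernoff_prob R d T P n (fun j w => q (X j w)) p m mp Pp.
by split => //; rewrite PE lee_fin; exact: chernoff_sum.
Qed.

Lemma tail1 d (T : measurableType d) (P : probability T R) (n : nat)
  (X : 'I_n -> T -> R) (q : R -> bool) (p : R) (m : nat) (e : R) :
  iid_uniform01 P X -> measurable [set y | q y] ->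
  (@lebesgue_measure R) ([set y | q y] `&` `[0%R, 1%R]) = p%:E ->
  0 <= p -> p <= 1 -> 0 <= e -> m%:R <= n%:R * (p - e) ->
  (P [set w | (#|[set j | q (X j w)]%SET| <= m)%N]
    <= (expR (- (n%:R * e ^+ 2 / 2)))%:E)%E.
Proof.
move=> hX mQ hp p0 p1 e0 hm.
have [_ h] := @tail_gen d T P n X q p m e hX mQ hp p0 p1 e0.
apply: le_trans h _; rewrite lee_fin.
have b0 : 0 <= 1 - p + p * expR (- e).
  by apply: addr_ge0; [rewrite subr_ge0 | apply: mulr_ge0 => //; exact: expR_ge0].
have b1 : 1 - p + p * expR (- e) <= expR (- (p * (e - e ^+ 2 / 2))).
  apply: le_trans (expR_ge1Dx _).
  have := ler_wpM2l p0 (@expN_quad R e e0); lra.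
have b2 : (1 - p + p * expR (- e)) ^+ n <= expR (- (p * (e - e ^+ 2 / 2))) ^+ n.
  by apply: lerXn2r; rewrite ?nnegrE ?expR_ge0.
apply: le_trans (ler_wpM2l (expR_ge0 _) b2) _.
rewrite -expRM_natr -expRD ler_expR.
have n0 : 0 <= (n%:R : R) by [].
have h2 : e * m%:R <= e * (n%:R * (p - e)) by rewrite ler_wpM2l.
have h3 : 0 <= n%:R * e ^+ 2 * (1 - p).
  by apply: mulr_ge0; [apply: mulr_ge0 => //; exact: sqr_ge0 | rewrite subr_ge0].
nra.
Qed.

Lemma tail2 d (T : measurableType d) (P : probability T R) (n : nat)
  (X : 'I_n -> T -> R) (q : R -> bool) (m : nat) (t : R) :
  iid_uniform01 P X -> measurable [set y | q y] ->
  (@lebesgue_measure R) ([set y | q y] `&` `[0%R, 1%R]) = 1%:E ->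
  0 <= t -> (m < n)%N ->
  (P [set w | (#|[set j | q (X j w)]%SET| <= m)%N] <= (expR (- t))%:E)%E.
Proof.
move=> hX mQ hp t0 mn.
have [_ h] := @tail_gen d T P n X q 1 m t hX mQ hp ler01 (lexx 1) t0.
apply: le_trans h _; rewrite lee_fin subrr add0r mul1r -expRM_natr -expRD ler_expR.
have HH : ((m.+1)%:R <= n%:R :> R) by rewrite ler_nat.
rewrite -natr1 in HH.
nra.
Qed.
End Cor.

Section Itv.
Variable R : realType.

Lemma meas_le (a : R) : measurable [set y : R | y <= a].
Proof.
have -> : [set y : R | y <= a] = `]-oo, a]%classic.
  by apply/seteqP; split => y /=; rewrite in_itv.
exact: measurable_itv.
Qed.

Lemma meas_ge (b : R) : measurable [set y : R | b <= y].
Proof.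
have -> : [set y : R | b <= y] = `[b, +oo[%classic.
  by apply/seteqP; split => y /=; rewrite in_itv /= andbT.
exact: measurable_itv.
Qed.

Lemma leb_le (a : R) : 0 < a -> a < 1 ->
  (@lebesgue_measure R) ([set y | y <= a] `&` `[0%R, 1%R]) = a%:E.
Proof.
move=> a0 a1.
have -> : [set y | y <= a] `&` `[0%R, 1%R] = `[0%R, a]%classic.
  apply/seteqP; split => y /=; rewrite !in_itv /=.
  - by move=> [ya /andP[y0 y1]]; rewrite y0 ya.
  - move=> /andP[y0 ya]; split => //; rewrite y0 /=; exact: (le_trans ya (ltW a1)).
by rewrite lebesgue_measure_itv /= lte_fin a0 -EFinD subr0.
Qed.

Lemma leb_le1 (a : R) : 1 <= a ->
  (@lebesgue_measure R) ([set y | y <= a] `&` `[0%R, 1%R]) = 1%:E.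
Proof.
move=> a1.
have -> : [set y | y <= a] `&` `[0%R, 1%R] = `[0%R, 1%R]%classic.
  apply/seteqP; split => y /=; rewrite ?in_itv /=.
  - by move=> [].
  - move=> /andP[y0 y1]; split; [exact: (le_trans y1 a1)| by rewrite y0 y1].
by rewrite lebesgue_measure_itv /= lte_fin ltr01 -EFinD subr0.
Qed.

Lemma leb_ge (b : R) : 0 < b -> b < 1 ->
  (@lebesgue_measure R) ([set y | b <= y] `&` `[0%R, 1%R]) = (1 - b)%:E.
Proof.
move=> b0 b1.
have -> : [set y | b <= y] `&` `[0%R, 1%R] = `[b, 1%R]%classic.
  apply/seteqP; split => y /=; rewrite !in_itv /=.
  - by move=> [ya /andP[y0 y1]]; rewrite y1 ya.
  - move=> /andP[yb y1]; split => //; rewrite y1 andbT; exact: (le_trans (ltW b0) yb).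
by rewrite lebesgue_measure_itv /= lte_fin b1 -EFinD.
Qed.

Lemma leb_ge0 (b : R) : b <= 0 ->
  (@lebesgue_measure R) ([set y | b <= y] `&` `[0%R, 1%R]) = 1%:E.
Proof.
move=> b0.
have -> : [set y | b <= y] `&` `[0%R, 1%R] = `[0%R, 1%R]%classic.
  apply/seteqP; split => y /=; rewrite ?in_itv /=.
  - by move=> [].
  - move=> /andP[y0 y1]; split; [exact: (le_trans b0 y0)| by rewrite y0 y1].
by rewrite lebesgue_measure_itv /= lte_fin ltr01 -EFinD subr0.
Qed.
End Itv.

Section Dev.
Variable R : realType.

Lemma kH_facts (H k : nat) : (0 < H)%N -> (k < H)%N ->
  0 <= k%:R / H%:R :> R /\ k%:R / H%:R < 1 :> R.
Proof.
move=> H0 kH; split; first by apply: divr_ge0.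
by rewrite ltr_pdivrMr ?ltr0n // mul1r ltr_nat.
Qed.

Lemma nkH (H c k : nat) : (0 < H)%N ->
  (H * c)%:R * (k%:R / H%:R) = (k * c)%:R :> R.
Proof.
move=> H0; rewrite !natrM; field.
by rewrite pnatr_eq0 -lt0n.
Qed.

Lemma devU d (T : measurableType d) (P : probability T R) (H c k : nat)
  (X : 'I_(H * c) -> T -> R) (e : R) :
  iid_uniform01 P X -> (0 < c)%N -> (1 <= k)%N -> (k < H)%N -> 0 < e ->
  measurable [set w | (k%:R / H%:R + e < ostat (H * c) (k * c) (fun j => X j w))%R] /\
  (P [set w | (k%:R / H%:R + e < ostat (H * c) (k * c) (fun j => X j w))%R] <=
     (expR 1 * expR (- (((H * c)%:R + 1) * (e ^+ 2 / 2))))%:E)%E.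
Proof.
move=> hX c0 k1 kH e0.
have H0 : (0 < H)%N by apply: leq_ltn_trans kH.
have [kH0 kH1] := @kH_facts H k H0 kH.
set a := k%:R / H%:R + e.
have kc0 : (0 < k * c)%N by rewrite muln_gt0 k1.
have kcn : (k * c <= H * c)%N by rewrite leq_mul2r ltnW ?orbT.
have eqw w : (a < ostat (H * c) (k * c) (fun j => X j w)) =
    (#|[set j | (X j w <= a)%R]%SET| <= (k * c).-1)%N.
  rewrite ltNge (@ostat_count R (H * c) (k * c) (fun j => X j w) (fun y => y <= a)).
  - by rewrite -ltnNge -{1}(ltn_predK kc0) ltnS.
  - by move=> y z zy ya; exact: le_trans zy ya.
  - by rewrite kc0 kcn.
have -> : [set w | a < ostat (H * c) (k * c) (fun j => X j w)] =
          [set w | (#|[set j | (X j w <= a)%R]%SET| <= (k * c).-1)%N].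
  by apply/seteqP; split => w /=; rewrite eqw.
have hm : (((k * c).-1)%:R <= (H * c)%:R * (k%:R / H%:R) :> R).
  by rewrite nkH // ler_nat leq_pred.
have e1 : 1 <= expR (1 : R) by have := expR_ge1Dx (1 : R); lra.
case: (ltP a 1) => ha.
- have a0 : 0 < a by rewrite /a; lra.
  have hp := @leb_le R a a0 ha.
  have [mE _] := @tail_gen R d T P (H * c) X (fun y => y <= a) a (k * c).-1 0
     hX (@meas_le R a) hp (ltW a0) (ltW ha) (lexx 0).
  split => //.
  have := @tail1 R d T P (H * c) X (fun y => y <= a) a (k * c).-1 e
     hX (@meas_le R a) hp (ltW a0) (ltW ha) (ltW e0).
  rewrite /a addrK => /(_ hm) h; apply: le_trans h _; rewrite lee_fin.
  rewrite -expRD ler_expR.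
  have ee : e < 1 by rewrite /a in ha; lra.
  have : e ^+ 2 <= 1 by rewrite expr_le1 // ltW.
  lra.
- have hp := @leb_le1 R a ha.
  have t0 : 0 <= ((H * c)%:R + 1) * (e ^+ 2 / 2) :> R.
    by apply: mulr_ge0; [apply: addr_ge0 | apply: divr_ge0 => //; exact: sqr_ge0].
  have mn : ((k * c).-1 < H * c)%N by rewrite prednK.
  have [mE _] := @tail_gen R d T P (H * c) X (fun y => y <= a) 1 (k * c).-1 0
     hX (@meas_le R a) hp ler01 (lexx 1) (lexx 0).
  split => //.
  have h := @tail2 R d T P (H * c) X (fun y => y <= a) (k * c).-1 _
     hX (@meas_le R a) hp t0 mn.
  apply: le_trans h _; rewrite lee_fin.
  have := expR_ge0 (- (((H * c)%:R + 1) * (e ^+ 2 / 2))).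
  nra.
Qed.
End Dev.

Section DevL.
Variable R : realType.

Lemma devL d (T : measurableType d) (P : probability T R) (H c k : nat)
  (X : 'I_(H * c) -> T -> R) (e : R) :
  iid_uniform01 P X -> (0 < c)%N -> (1 <= k)%N -> (k < H)%N -> 0 < e ->
  measurable [set w | (ostat (H * c) (k * c) (fun j => X j w) < k%:R / H%:R - e)%R] /\
  (P [set w | (ostat (H * c) (k * c) (fun j => X j w) < k%:R / H%:R - e)%R] <=
     (expR 1 * expR (- (((H * c)%:R + 1) * (e ^+ 2 / 2))))%:E)%E.
Proof.
move=> hX c0 k1 kH e0.
have H0 : (0 < H)%N by apply: leq_ltn_trans kH.
have [kH0 kH1] := @kH_facts R H k H0 kH.
set b := k%:R / H%:R - e.
have kc0 : (0 < k * c)%N by rewrite muln_gt0 k1.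
have kcn : (k * c <= H * c)%N by rewrite leq_mul2r ltnW ?orbT.
have eqw w : (ostat (H * c) (k * c) (fun j => X j w) < b) =
    (#|[set j | (b <= X j w)%R]%SET| <= H * c - k * c)%N.
  rewrite (@ostat_count R (H * c) (k * c) (fun j => X j w) (fun y => y < b)); last 2 first.
  - by move=> y z zy yb; exact: le_lt_trans zy yb.
  - by rewrite kc0 kcn.
  have -> : [set j | (b <= X j w)%R]%SET = ~: [set j | (X j w < b)%R]%SET.
    by apply/setP => j; rewrite !inE leNgt.
  rewrite cardsCs card_ord.
  have : (#|[set j | (X j w < b)%R]%SET| <= H * c)%N.
    by rewrite -[X in (_ <= X)%N]card_ord max_card.
  move: (#|_|) => x xn.
  by apply/idP/idP => h; lia.
have -> : [set w | (ostat (H * c) (k * c) (fun j => X j w) < b)%R] =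
          [set w | (#|[set j | (b <= X j w)%R]%SET| <= H * c - k * c)%N].
  by apply/seteqP; split => w /=; rewrite eqw.
have hm : ((H * c - k * c)%:R <= (H * c)%:R * ((1 - b) - e) :> R).
  rewrite natrB // -(@nkH R H c k H0) /b.
  have -> : 1 - (k%:R / H%:R - e) - e = 1 - k%:R / H%:R :> R by ring.
  by rewrite mulrBr mulr1.
have e1 : 1 <= expR (1 : R) by have := expR_ge1Dx (1 : R); lra.
case: (ltP 0 b) => hb.
- have b1 : b < 1 by rewrite /b; lra.
  have hp := @leb_ge R b hb b1.
  have p0 : 0 <= 1 - b by lra.
  have p1 : 1 - b <= 1 by lra.
  have [mE _] := @tail_gen R d T P (H * c) X (fun y => b <= y) (1 - b) (H * c - k * c) 0
     hX (@meas_ge R b) hp p0 p1 (lexx 0).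
  split => //.
  have h := @tail1 R d T P (H * c) X (fun y => b <= y) (1 - b) (H * c - k * c) e
     hX (@meas_ge R b) hp p0 p1 (ltW e0) hm.
  apply: le_trans h _; rewrite lee_fin.
  rewrite -expRD ler_expR.
  have ee : e < 1 by rewrite /b in hb; lra.
  have : e ^+ 2 <= 1 by rewrite expr_le1 // ltW.
  lra.
- have hp := @leb_ge0 R b hb.
  have t0 : 0 <= ((H * c)%:R + 1) * (e ^+ 2 / 2) :> R.
    by apply: mulr_ge0; [apply: addr_ge0 | apply: divr_ge0 => //; exact: sqr_ge0].
  have mn : (H * c - k * c < H * c)%N by rewrite ltn_subrL kc0 (leq_trans kc0 kcn).
  have [mE _] := @tail_gen R d T P (H * c) X (fun y => b <= y) 1 (H * c - k * c) 0
     hX (@meas_ge R b) hp ler01 (lexx 1) (lexx 0).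
  split => //.
  have h := @tail2 R d T P (H * c) X (fun y => b <= y) (H * c - k * c) _
     hX (@meas_ge R b) hp t0 mn.
  apply: le_trans h _; rewrite lee_fin.
  have := expR_ge0 (- (((H * c)%:R + 1) * (e ^+ 2 / 2))).
  nra.
Qed.
End DevL.

Section Meas.
Variable R : realType.

Lemma cnt_meas d (T : measurableType d) (n : nat) (X : 'I_n -> T -> R)
  (q : R -> bool) (m : nat) :
  (forall j, measurable_fun setT (X j)) -> measurable [set y | q y] ->
  measurable [set w | (#|[set j | q (X j w)]%SET| <= m)%N].
Proof.
move=> hX mQ.
have mX j S : measurable S -> measurable (X j @^-1` S).
  by move=> mS; rewrite -[X j @^-1` S]setTI; apply: (hX j).
have -> : [set w | (#|[set j | q (X j w)]%SET| <= m)%N] =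
  \bigcup_(f in [set f : {ffun 'I_n -> bool} | (#|[set j | f j]%SET| <= m)%N])
    \bigcap_(j in [set: 'I_n]) (X j @^-1` (if f j then [set y | q y] else ~` [set y | q y])).
  apply/seteqP; split => w /=.
  - move=> hw; exists [ffun j => q (X j w)].
      rewrite /=; have -> : [set j | [ffun j => q (X j w)] j]%SET = [set j | q (X j w)]%SET.
        by apply/setP => j; rewrite !inE ffunE.
      exact: hw.
    move=> j _; rewrite ffunE /preimage /=.
    by case E : (q (X j w)) => /=; rewrite ?E.
  - move=> [f hf hw].
    have -> : [set j | q (X j w)]%SET = [set j | f j]%SET.
      apply/setP => j; rewrite !inE; have := hw j I; rewrite /preimage /=.
      by case: (f j) => //= h; apply/negbTE/negP.
    exact: hf.
apply: fin_bigcup_measurable; first exact: finite_finset.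
move=> f _; apply: fin_bigcap_measurable; first exact: finite_finset.
move=> j _; apply: mX; case: (f j) => //; exact: measurableC.
Qed.

Lemma ostat_meas d (T : measurableType d) (n i : nat) (X : 'I_n -> T -> R) :
  (forall j, measurable_fun setT (X j)) -> (0 < i <= n)%N ->
  measurable_fun setT (fun w => ostat n i (fun j => X j w)).
Proof.
move=> hX /andP[i0 iN].
apply: (measurability _ (measurable_realfun.RGenOInfty.measurableE R)) => //.
move=> /= _ [_ [x ->] <-]; rewrite setTI.
have eqw w : (x < ostat n i (fun j => X j w)) =
    (#|[set j | (X j w <= x)%R]%SET| <= i.-1)%N.
  rewrite ltNge (@ostat_count R n i (fun j => X j w) (fun y => y <= x)).
  - by rewrite -ltnNge -{1}(ltn_predK i0) ltnS.
  - by move=> y z zy ya; exact: le_trans zy ya.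
  - by rewrite i0 iN.
have -> : (fun w => ostat n i (fun j => X j w)) @^-1` `]x, +oo[%classic =
          [set w | (#|[set j | (X j w <= x)%R]%SET| <= i.-1)%N].
  by apply/seteqP; split => w /=; rewrite in_itv /= andbT eqw.
exact: (@cnt_meas d T n X (fun y => y <= x)) hX (@meas_le R x).
Qed.

Lemma R1 (u a eps : R) : 0 <= a -> eps < `| `|u| - a| -> eps < `|u - a|.
Proof.
move=> a0 h; apply: lt_le_trans h _.
by have := ler_dist_dist u a; rewrite (ger0_norm a0).
Qed.

Lemma R2 (u a e : R) : e < `|u - a| -> a + e < u \/ u < a - e.
Proof.
rewrite ltr_normr => /orP[h|h]; [left|right]; lra.
Qed.

Lemma R3 (u v a1 a2 eps : R) : eps < `|(v - u) - (a2 - a1)| ->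
  eps / 2 < `|v - a2| \/ eps / 2 < `|u - a1|.
Proof.
move=> h.
have t : `|(v - u) - (a2 - a1)| <= `|v - a2| + `|u - a1|.
  have -> : (v - u) - (a2 - a1) = (v - a2) - (u - a1) by ring.
  exact: ler_normB.
case: (ltP (eps / 2) `|v - a2|) => h1; [by left|].
case: (ltP (eps / 2) `|u - a1|) => h2; [by right|].
lra.
Qed.

Lemma fin_num (H : nat) (s m z1 z2 : R) : (1 <= H)%N -> 1 <= s -> 0 <= m -> m <= 4 ->
  z2 <= z1 -> m * expR 1 * expR (- z1) <= 4 * expR 1 * H%:R * s * expR (- z2).
Proof.
move=> H1 s1 m0 m4 z.
have e1 := expR_gt0 (1 : R).
have ez : expR (- z1) <= expR (- z2) by rewrite ler_expR lerN2.
have ez0 := expR_gt0 (- z1).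
have H1' : 1 <= (H%:R : R) by rewrite ler1n.
have hs : 1 <= H%:R * s by nra.
have h1 : m * expR 1 <= 4 * expR 1 * H%:R * s.
  have : m * expR 1 <= 4 * expR 1 by rewrite ler_wpM2r // ltW.
  have : 4 * expR 1 <= 4 * expR 1 * (H%:R * s).
    by rewrite ler_peMr // mulr_ge0 // ltW.
  by move=> b a; apply: (le_trans a); rewrite mulrA in b.
apply: (@le_trans _ _ (4 * expR 1 * H%:R * s * expR (- z1))).
  by rewrite ler_wpM2r // ltW.
rewrite ler_wpM2l //.
by apply: mulr_ge0; [apply: mulr_ge0 => //; apply: mulr_ge0 => //; apply: ltW | nra].
Qed.
End Meas.

Section Fin.
Variable R : realType.

Lemma meas_gt d (T : measurableType d) (f : T -> R) (a : R) :
  measurable_fun setT f -> measurable [set w | (a < f w)%R].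
Proof.
move=> mf.
have -> : [set w | (a < f w)%R] = setT `&` f @^-1` `]a, +oo[%classic.
  by apply/seteqP; split => w /=; rewrite in_itv /= andbT //; move=> [].
exact: mf (measurable_itv _).
Qed.

Lemma sqrt_ge1 (x : R) : 1 <= x -> 1 <= Num.sqrt x.
Proof. by move=> x1; rewrite -{1}sqrtr1 ler_sqrt // (le_trans ler01 x1). Qed.

End Fin.

Section P3.
Variable R : realType.

Lemma part3 d (T : measurableType d) (P : probability T R) (H c : nat)
  (X : 'I_(H * c) -> T -> R) (eps : R) (k : nat) :
  iid_uniform01 P X -> (2 <= H)%N -> (0 < c)%N -> 0 < eps -> (1 <= k <= H)%N ->
  (P [set w | (eps < `| delta H c k (fun j => X j w) - 1 / H%:R |)%R] <=
    (4 * (expR 1 * expR (- (((H * c)%:R + 1) * ((eps / 2) ^+ 2 / 2)))))%:E)%E.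
Proof.
move=> hX H2 c0 eps0 /andP[k1 kH].
have hXm j : measurable_fun setT (X j) := (hX.1 j).1.
have H0 : (0 < H)%N by apply: leq_trans H2.
have H0' : (H%:R : R) != 0 by rewrite pnatr_eq0 -lt0n.
pose Y i w := ostat (H * c) (i * c) (fun j => X j w).
pose e := eps / 2.
have e0 : 0 < e by rewrite /e; lra.
pose b := (expR 1 * expR (- (((H * c)%:R + 1) * (e ^+ 2 / 2))))%:E.
pose Dv i := [set w | (i%:R / H%:R + e < Y i w)%R] `|` [set w | (Y i w < i%:R / H%:R - e)%R].
have hDv i : (1 <= i)%N -> (i < H)%N -> measurable (Dv i) /\ (P (Dv i) <= b + b)%E.
  move=> i1 iH.
  have [mA PA] := @devU R d T P H c i X e hX c0 i1 iH e0.
  have [mB PB] := @devL R d T P H c i X e hX c0 i1 iH e0.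
  split; first exact: measurableU.
  apply: le_trans (measureU2 _ mA mB) _.
  exact: leeD.
have toDv i w : e < `|Y i w - i%:R / H%:R| -> Dv i w.
  by move=> /R2 [h|h]; [left|right].
have mdelta : measurable_fun setT (fun w => delta H c k (fun j => X j w)).
  rewrite /delta; case: eqP => [_|kn1].
    apply: measurableT_comp; first exact: measurable_realfun.normr_measurable.
    apply: ostat_meas => //; rewrite c0 /= leq_pmull //.
  case: eqP => [_|knH].
    apply: measurableT_comp; first exact: measurable_realfun.normr_measurable.
    apply: measurable_realfun.measurable_funB; first exact: measurable_cst.
    apply: ostat_meas => //.
    rewrite muln_gt0 c0 andbT subn_gt0 H2 /= leq_mul2r leq_subr orbT //.
  apply: measurableT_comp; first exact: measurable_realfun.normr_measurable.
  apply: measurable_realfun.measurable_funB; apply: ostat_meas => //.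
  - apply/andP; split; first by rewrite muln_gt0 c0 andbT subn_gt0; lia.
    by rewrite leq_mul2r; apply/orP; right; lia.
  - by rewrite muln_gt0 c0 andbT leq_mul2r kH orbT andbT; lia.
set E := [set w | (eps < `| delta H c k (fun j => X j w) - 1 / H%:R |)%R].
have hE : measurable E.
  apply: meas_gt; apply: measurableT_comp; first exact: measurable_realfun.normr_measurable.
  apply: measurable_realfun.measurable_funB => //; exact: measurable_cst.
have iH0 : 0 <= 1 / H%:R :> R by apply: divr_ge0.
have key : exists i1 i2, [/\ (1 <= i1 < H)%N, (1 <= i2 < H)%N & E `<=` Dv i1 `|` Dv i2].
  case: (eqVneq k 1%N) => [k1e|kn1].
    exists 1%N, 1%N; split => //; move=> w; rewrite /E /= k1e /delta eqxx => h.
    left; apply: toDv; rewrite /Y mul1n mulr1n.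
    have := @R1 R _ _ _ iH0 h; rewrite /e; lra.
  case: (eqVneq k H) => [kHe|knH].
    have HP : (1 <= H.-1 < H)%N by apply/andP; split; lia.
    exists H.-1, H.-1; split => //; move=> w; rewrite /E /= kHe /delta.
    have -> : (H == 1%N) = false by apply/eqP; lia.
    rewrite eqxx => h.
    left; apply: toDv; rewrite /Y -subn1.
    have := @R1 R _ _ _ iH0 h.
    have -> : (H - 1)%:R / H%:R = 1 - 1 / H%:R :> R.
      by rewrite natrB ?H0 //; field; rewrite pnatr_eq0 -lt0n.
    set y := ostat _ _ _.
    have -> : 1 - y - 1 / H%:R = - (y - (1 - 1 / H%:R)) by ring.
    rewrite normrN /e; lra.
  have kH' : (k < H)%N by lia.
  exists k.-1, k; split; [apply/andP; split; lia | by rewrite k1 kH' |].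
  move=> w; rewrite /E /= /delta (negbTE kn1) (negbTE knH) (distrC (ostat _ ((k - 1) * c) _)) => h.
  have := @R1 R _ _ _ iH0 h.
  have -> : 1 / H%:R = k%:R / H%:R - (k.-1)%:R / H%:R :> R.
    by rewrite -subn1 natrB //; field; rewrite pnatr_eq0 -lt0n.
  move=> /R3 [h1|h2]; [right|left]; apply: toDv; rewrite /Y.
  - by rewrite /e.
  - by move: h2; rewrite /e subn1.
have [i1 [i2 [/andP[a1 a2] /andP[b1 b2] sub]]] := key.
have [m1 P1] := hDv i1 a1 a2.
have [m2 P2] := hDv i2 b1 b2.
have LM := le_measure P (mem_set hE) (mem_set (measurableU _ _ m1 m2)) sub.
apply: le_trans LM _.
apply: le_trans (measureU2 _ m1 m2) _.
apply: le_trans (leeD P1 P2) _.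
by rewrite /b /e -!EFinD lee_fin; lra.
Qed.
End P3.

Theorem lemma20 (R : realType) :
  (* (i) *)
  (exists C : R, 0 < C /\ exists N : nat, forall H c : nat, (N <= H)%N -> (N <= c)%N ->
     forall (d : measure_display) (T : measurableType d) (P : probability T R)
            (X : 'I_(H * c) -> T -> R), iid_uniform01 P X ->
     forall k : nat, (1 <= k <= H - 1)%N ->
     forall eps : R, 1 / ((H * c)%:R - 1) < eps ->
       (P [set w | (k%:R / H%:R + eps < ostat (H * c) (k * c) (fun j => X j w))%R]
       <= ((C * H%:R * Num.sqrt ((H * c)%:R + 1)
             * expR (- (((H * c)%:R + 1) * (eps ^+ 2 / 2))))%R)%:E)%E) /\
  (* (ii) *)
  (exists C : R, 0 < C /\ exists N : nat, forall H c : nat, (N <= H)%N -> (N <= c)%N ->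
     forall (d : measure_display) (T : measurableType d) (P : probability T R)
            (X : 'I_(H * c) -> T -> R), iid_uniform01 P X ->
     forall k : nat, (1 <= k <= H - 1)%N ->
     forall eps : R, 2 / ((H * c)%:R - 1) < eps ->
       (P [set w | (ostat (H * c) (k * c) (fun j => X j w) < k%:R / H%:R - eps)%R]
       <= ((C * H%:R * Num.sqrt ((H * c)%:R + 1)
             * expR (- (((H * c)%:R + 1) * (eps ^+ 2 / 8))))%R)%:E)%E) /\
  (* (iii) *)
  (exists C : R, 0 < C /\ exists N : nat, forall H c : nat, (N <= H)%N -> (N <= c)%N ->
     forall (d : measure_display) (T : measurableType d) (P : probability T R)
            (X : 'I_(H * c) -> T -> R), iid_uniform01 P X ->
     forall eps : R, 4 / ((H * c)%:R - 1) < eps ->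
     forall k : nat, (1 <= k <= H)%N ->
       (P [set w | (eps < `| delta H c k (fun j => X j w) - 1 / H%:R |)%R]
       <= ((C * H%:R * Num.sqrt ((H * c)%:R + 1)
             * expR (- (((H * c)%:R + 1) * (eps ^+ 2 / 32))))%R)%:E)%E).
Proof.
have e1 : 1 <= expR (1 : R) by have := expR_ge1Dx (1 : R); lra.
have C0 : 0 < 4 * expR (1 : R) by apply: mulr_gt0 => //; exact: expR_gt0.
have common (H c : nat) (eps x : R) : (2 <= H)%N -> (2 <= c)%N -> 1 <= x ->
    x / ((H * c)%:R - 1) < eps ->
    [/\ 0 < eps, (0 < c)%N, (1 <= H)%N & 1 <= Num.sqrt ((H * c)%:R + 1) :> R].
  move=> H2 c2 x1 heps.
  have n4 : (4 <= H * c)%N by apply: (@leq_mul 2 2).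
  have n4' : (4 : R) <= (H * c)%:R by rewrite (ler_nat R 4).
  have pos : 0 < x / ((H * c)%:R - 1) :> R by apply: divr_gt0; lra.
  split.
  - exact: lt_trans pos heps.
  - exact: leq_trans c2.
  - exact: leq_trans H2.
  - apply: sqrt_ge1; lra.
split; [|split].
- exists (4 * expR 1); split => //; exists 2%N => H c H2 c2 d T P X hX k /andP[k1 kH] eps heps.
  have [eps0 c0 H1 s1] := common H c eps 1 H2 c2 (lexx 1) heps.
  have kH' : (k < H)%N by lia.
  have [_ h] := @devU R d T P H c k X eps hX c0 k1 kH' eps0.
  apply: le_trans h _; rewrite lee_fin.
  have := @fin_num R H _ 1 _ _ H1 s1 ler01 (ler1n R 4) (lexx (((H * c)%:R + 1) * (eps ^+ 2 / 2))).
  by rewrite mul1r.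
- exists (4 * expR 1); split => //; exists 2%N => H c H2 c2 d T P X hX k /andP[k1 kH] eps heps.
  have [eps0 c0 H1 s1] := common H c eps 2 H2 c2 (ler1n R 2) heps.
  have kH' : (k < H)%N by lia.
  have [_ h] := @devL R d T P H c k X eps hX c0 k1 kH' eps0.
  apply: le_trans h _; rewrite lee_fin.
  have z : ((H * c)%:R + 1) * (eps ^+ 2 / 8) <= ((H * c)%:R + 1) * (eps ^+ 2 / 2) :> R.
    apply: ler_wpM2l; first exact: addr_ge0.
    have := sqr_ge0 eps; lra.
  have := @fin_num R H _ 1 _ _ H1 s1 ler01 (ler1n R 4) z.
  by rewrite mul1r.
- exists (4 * expR 1); split => //; exists 2%N => H c H2 c2 d T P X hX eps heps k hk.
  have [eps0 c0 H1 s1] := common H c eps 4 H2 c2 (ler1n R 4) heps.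
  have h := @part3 R d T P H c X eps k hX H2 c0 eps0 hk.
  apply: le_trans h _; rewrite lee_fin mulrA.
  have z : ((H * c)%:R + 1) * (eps ^+ 2 / 32) <= ((H * c)%:R + 1) * ((eps / 2) ^+ 2 / 2) :> R.
    apply: ler_wpM2l; first exact: addr_ge0.
    have := sqr_ge0 eps; nra.
  exact: (@fin_num R H _ 4 _ _ H1 s1 (ler0n R 4) (lexx 4) z).
Qed.
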